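(* Let $\phi:V\to V$ be a continuous coherency preserver. Assume that $\phi$ is constant on some coherent line, i.e. on some line $a+\mathbb{R}x$ with $a\in V$ and $x\in V\setminus\{0\}$, $q(x)=0$. Then $\phi$ is degenerate.
   Context: Fix an integer $n\ge4$, let $V=\mathbb{R}^n$ with its standard topology and $q(x_1,\dots,x_n)=x_n^2-\sum_{k=1}^{n-1}x_k^2$. Points $x,y$ are coherent when $q(x-y)=0$. For $a\in V$, $\mathcal{C}(a)=\{m\in V: q(m-a)=0\}$. A coherency preserver is a map $\phi:V\to V$ such that $q(b-a)=0$ implies $q(\phi(b)-\phi(a))=0$; it is degenerate when its range is included in $\mathcal{C}(c)$ for some $c\in V$. *)

(* Defs.v *)
(* V = R^n is the row-vector space 'rV[R]_n
   over R : realType, with its canonical (product = standard) topology. *)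
From HB Require Import structures.
From mathcomp Require Import all_boot all_order all_algebra.
From mathcomp Require Import all_classical all_reals all_analysis.
Set Implicit Arguments. Unset Strict Implicit. Unset Printing Implicit Defensive.
Import Order.TTheory GRing.Theory Num.Theory.
Import numFieldNormedType.Exports.
Local Open Scope ring_scope.
Local Open Scope classical_set_scope.

(* q(x) = x_n^2 - sum_{k=1}^{n-1} x_k^2 ; coordinate x_n is the index n.-1 (0-based) *)
Definition q (R : realType) (n : nat) (x : 'rV[R]_n) : R :=
  \sum_(i < n | nat_of_ord i == n.-1) x 0 i ^+ 2
  - \sum_(i < n | nat_of_ord i != n.-1) x 0 i ^+ 2.

Definition coherent (R : realType) (n : nat) (x y : 'rV[R]_n) : Prop :=
  q (x - y) = 0.

Definition cone (R : realType) (n : nat) (a : 'rV[R]_n) : set 'rV[R]_n :=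
  [set m | q (m - a) = 0].

Definition coherency_preserver (R : realType) (n : nat)
  (phi : 'rV[R]_n -> 'rV[R]_n) : Prop :=
  forall a b : 'rV[R]_n, q (b - a) = 0 -> q (phi b - phi a) = 0.

Definition degenerate (R : realType) (n : nat)
  (phi : 'rV[R]_n -> 'rV[R]_n) : Prop :=
  exists c : 'rV[R]_n, range phi `<=` cone c.

(* Main.v *)
Require Import Defs.
From HB Require Import structures.
From mathcomp Require Import all_boot all_order all_algebra.
From mathcomp Require Import all_classical all_reals all_analysis.
From mathcomp Require Import ring lra.
Import Order.TTheory GRing.Theory Num.Theory.
Import numFieldNormedType.Exports.
Local Open Scope ring_scope.
Local Open Scope classical_set_scope.
Set Implicit Arguments. Unset Strict Implicit.
Definition bil (R : realType) (n : nat) (u v : 'rV[R]_n) : R :=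
  \sum_(i < n | nat_of_ord i == n.-1) u 0 i * v 0 i
  - \sum_(i < n | nat_of_ord i != n.-1) u 0 i * v 0 i.

Lemma qDZ (R : realType) (n : nat) (u v : 'rV[R]_n) (t : R) :
  q (u + t *: v) = q u + 2 * t * bil u v + t ^+ 2 * q v.
Proof.
have E : forall P : pred 'I_n, \sum_(i | P i) ((u + t *: v) 0 i) ^+ 2 =
   \sum_(i | P i) u 0 i ^+ 2 + 2 * t * \sum_(i | P i) u 0 i * v 0 i
   + t ^+ 2 * \sum_(i | P i) v 0 i ^+ 2.
  move=> P; rewrite !mulr_sumr -!big_split; apply: eq_bigr => i _.
  rewrite !mxE /=; ring.
rewrite /q /bil !E; ring.
Qed.

Lemma bilD (R : realType) (n : nat) (u v w : 'rV[R]_n) (t : R) :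
  bil (u + t *: v) w = bil u w + t * bil v w.
Proof.
have E : forall P : pred 'I_n, \sum_(i | P i) (u + t *: v) 0 i * w 0 i =
   \sum_(i | P i) u 0 i * w 0 i + t * \sum_(i | P i) v 0 i * w 0 i.
  move=> P; rewrite !mulr_sumr -!big_split; apply: eq_bigr => i _.
  rewrite !mxE /=; ring.
rewrite /bil !E; ring.
Qed.

Lemma bil_nondeg (R : realType) (n : nat) (x : 'rV[R]_n) :
  x != 0 -> exists e, bil e x != 0.
Proof.
move=> x0.
exists (\row_j (if nat_of_ord j == n.-1 then x 0 j else - x 0 j)).
have -> : bil (\row_j (if nat_of_ord j == n.-1 then x 0 j else - x 0 j)) x
   = \sum_j x 0 j ^+ 2.
  rewrite /bil [in RHS](bigID (fun j : 'I_n => nat_of_ord j == n.-1)) /=.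
  rewrite -sumrN; congr (_ + _); apply: eq_bigr => i Hi; rewrite mxE ?Hi.
    by rewrite expr2.
  by rewrite (negbTE Hi) expr2 mulNr opprK.
apply/eqP => /psumr_eq0P H.
move/eqP: x0; apply; apply/rowP => j; rewrite mxE.
have /eqP := H (fun i _ => sqr_ge0 (x 0 i)) j isT.
by rewrite sqrf_eq0 => /eqP.
Qed.

Lemma q_cont (R : realType) (n : nat) : continuous (@q R n).
Proof.
have hs : forall P : pred 'I_n,
  continuous (fun z : 'rV[R]_n => \sum_(i | P i) z 0 i ^+ 2).
  move=> P; apply: continuous_big; first exact: add_continuous.
  move=> i _ z.
  exact: (continuous_comp (@coord_continuous R 1 n 0 i z) (@exprn_continuous R 2 _)).
move=> y; rewrite /q.
exact: (continuousB (hs _ y) (hs _ y)).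
Qed.

Theorem proposition4p1 (R : realType) (n : nat) (phi : 'rV[R]_n -> 'rV[R]_n) :
  (4 <= n)%N ->
  continuous phi ->
  coherency_preserver phi ->
  (exists (a x : 'rV[R]_n) (c : 'rV[R]_n),
      x != 0 /\ q x = 0 /\ (forall t : R, phi (a + t *: x) = c)) ->
  degenerate phi.
Proof.
move=> _ phic cp [a [x [c [x0 [qx Hc]]]]].
exists c => _ [m _ <-]; rewrite /cone /=.
have key : forall y, bil (y - a) x != 0 -> q (phi y - c) = 0.
  move=> y hb; set t := q (y - a) / (2 * bil (y - a) x).
  rewrite -(Hc t); apply: cp.
  have -> : y - (a + t *: x) = (y - a) + (- t) *: x.
    by rewrite scaleNr opprD addrA.
  rewrite qDZ qx /t; field; exact: hb.
have [e he] := bil_nondeg x0.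
case: (eqVneq (bil (m - a) x) 0) => hb; last exact: key.
pose g := fun s : R => q (phi (m + s *: e) - c).
have h1 : continuous (fun s : R => m + s *: e).
  move=> s; apply: cvgD; [exact: cvg_cst | apply: cvgZr_tmp; exact: cvg_id].
have h2 : continuous (fun y : 'rV[R]_n => q (y - c)).
  move=> y.
  have Hf : {for y, continuous (fun y : 'rV[R]_n => y - c)}.
    have hid : {for y, continuous (fun y : 'rV[R]_n => y)} by exact: cvg_id.
    have hc : {for y, continuous (fun _ : 'rV[R]_n => c)} by apply: cst_continuous.
    exact: (continuousB hid hc).
  have := continuous_comp Hf (@q_cont R n _).
  exact.
have gc : {for 0, continuous g}.
  exact: (continuous_comp (continuous_comp (h1 0) (phic _)) (h2 _)).
have /continuous_withinNx gw := gc.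
have g0 : g s @[s --> 0^'] --> 0.
  apply: cvg_near_cst; near=> s.
  rewrite /g; apply: key.
  have -> : m + s *: e - a = (m - a) + s *: e by rewrite addrAC.
  rewrite bilD hb add0r mulf_neq0 //.
  near: s; exact: nbhs_dnbhs_neq.
have := cvg_unique _ g0 gw.
by rewrite /g /= scale0r addr0 => <-.
Unshelve. all: by end_near.
Qed.
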